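(* Let $\Gamma$ be a finite multiset of freshness and equality formulas well-formed in a context $\Sigma$. If $\Sigma;\Gamma\Rightarrow\bot$ is derivable in the sequent calculus $NL^{\Rightarrow}$, then $\Gamma$ is unsatisfiable, i.e. there is no interpretation $\theta$ with $\theta:\Sigma$ and $\theta\models A$ for every $A\in\Gamma$.
   Context: Sequent calculus $NL^{\Rightarrow}$. Types $\tau ::= \delta \mid \nu \mid \langle\nu\rangle\tau$ ($\delta$ data types, $\nu$ name types). Terms $t ::= x \mid \mathsf{a} \mid c \mid f(\vec t)$ over variables $x$ and a disjoint countably infinite set of name-symbols $\mathsf a$; the signature contains, for all $\nu,\tau$, swapping $(a\;b)\cdot t$, abstraction $\langle a\rangle t$ (type $\langle\nu\rangle\tau$), equality $t\approx u$, freshness $a\#t$, besides constants $c$, function symbols $f$ and relation symbols $p$. Formulas: $\top,\bot$, atoms, $\wedge,\vee,\supset,\forall x{:}\tau,\exists x{:}\tau$, and $\mathsf N\mathsf a{:}\nu.\phi$ (binding the name-symbol $\mathsf a$). Contexts $\Sigma::=\cdot\mid\Sigma,x{:}\tau\mid\Sigma\#\mathsf a{:}\nu$ (no symbol twice; $\Sigma\#\mathsf a{:}\nu$ means $\mathsf a$ is fresh for everything in $\Sigma$); $Tm_\Sigma$ = terms well-typed in $\Sigma$; $|\cdot|=\emptyset$, $|\Sigma,x{:}\tau|=|\Sigma|$, $|\Sigma\#\mathsf a{:}\nu|=|\Sigma|\cup\{\mathsf a\#t\mid t\in Tm_\Sigma\}$. Rules for $\Sigma;\Gamma\Rightarrow\Delta$: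 (i) classical G3c rules (atomic initial sequents, $\top R$, $\bot L$, context-sharing left/right rules for $\wedge,\vee,\supset,\forall,\exists$, eigenvariables added to $\Sigma$); (ii) $\mathsf N R$: from $\Sigma\#\mathsf a{:}\nu;\Gamma\Rightarrow\phi,\Delta$ infer $\Sigma;\Gamma\Rightarrow\mathsf N\mathsf a{:}\nu.\phi,\Delta$; $\mathsf N L$: from $\Sigma\#\mathsf a{:}\nu;\Gamma,\phi\Rightarrow\Delta$ infer $\Sigma;\Gamma,\mathsf N\mathsf a{:}\nu.\phi\Rightarrow\Delta$ ($\mathsf a\notin\Sigma$); (iii) $\approx R$: from $\Sigma;\Gamma,t\approx t\Rightarrow\Delta$ infer $\Sigma;\Gamma\Rightarrow\Delta$; $\approx S$: from $\Sigma;\Gamma,t\approx u,P(t),P(u)\Rightarrow\Delta$ infer $\Sigma;\Gamma,t\approx u,P(t)\Rightarrow\Delta$ ($P$ atomic); for each instance $\bigwedge_j P_j\supset\bigvee_{i\le m}Q_i$ ($m\ge0$) of (S1) $(a\;a)\cdot x\approx x$, (S2) $(a\;b)\cdot(a\;b)\cdot x\approx x$, (S3) $(a\;b)\cdot a\approx b$, (E1) $(a\;b)\cdot c\approx c$, (E2) $(a\;b)\cdot f(\vec t)\approx f((a\;b)\cdot\vec t)$, (E3) $p(\vec t)\supset p((a\;b)\cdot\vec t)$, (F1) $a\#x\wedge b\#x\supset(a\;b)\cdot x\approx x$, (F2) $a\#b$ ($a,b$ of distinct name types), (F3) $a\#a\supset\bot$, (F4) $a\#b\vee a\approx b$, (A1)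 $a\#y\wedge x\approx(a\;b)\cdot y\supset\langle a\rangle x\approx\langle b\rangle y$ (arbitrary well-typed terms), the rule: from $\Sigma;\Gamma,\vec P,Q_i\Rightarrow\Delta$ for all $i$ infer $\Sigma;\Gamma,\vec P\Rightarrow\Delta$; (A2) from $\Sigma;\Gamma,E,a\approx b,t\approx u\Rightarrow\Delta$ and $\Sigma;\Gamma,E,a\#u,t\approx(a\;b)\cdot u\Rightarrow\Delta$ infer $\Sigma;\Gamma,E\Rightarrow\Delta$, $E$ being $\langle a\rangle t\approx\langle b\rangle u$; (A3) from $\Sigma\vdash t:\langle\nu\rangle\sigma$ and $\Sigma,a{:}\nu,x{:}\sigma;\Gamma,t\approx\langle a\rangle x\Rightarrow\Delta$ ($a,x\notin\Sigma$) infer $\Sigma;\Gamma\Rightarrow\Delta$; (F) from $\Sigma\#\mathsf a{:}\nu;\Gamma\Rightarrow\Delta$ ($\mathsf a\notin\Sigma$) infer $\Sigma;\Gamma\Rightarrow\Delta$; ($\Sigma\#$) from $\Sigma;\Gamma,\mathsf a\#t\Rightarrow\Delta$ with $\mathsf a\#t\in|\Sigma|$ infer $\Sigma;\Gamma\Rightarrow\Delta$. Herbrand model. $Tm$: ground swapping-free terms $t::=\mathsf a\mid c\mid f(\vec t)\mid\langle\mathsf a\rangle t$. Syntactic swapping: $(\mathsf a\;\mathsf b)\cdot\mathsf a=\mathsf b$, $(\mathsf a\;\mathsf b)\cdot\mathsf b=\mathsf a$, $(\mathsf a\;\mathsf b)\cdot\mathsf c=\mathsf c$ ($\mathsf c\ne\mathsf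 a,\mathsf b$), $(\mathsf a\;\mathsf b)\cdot c=c$, $(\mathsf a\;\mathsf b)\cdot f(\vec t)=f((\mathsf a\;\mathsf b)\cdot\vec t)$, $(\mathsf a\;\mathsf b)\cdot\langle\mathsf c\rangle t=\langle(\mathsf a\;\mathsf b)\cdot\mathsf c\rangle((\mathsf a\;\mathsf b)\cdot t)$. Freshness (inductive): $\mathsf a\#\mathsf b$ if $\mathsf a\ne\mathsf b$; $\mathsf a\#c$; $\mathsf a\#f(\vec t)$ if $\mathsf a\#t_i$ for all $i$; $\mathsf a\#\langle\mathsf a\rangle t$; $\mathsf a\#\langle\mathsf b\rangle t$ if $\mathsf a\ne\mathsf b$ and $\mathsf a\#t$. Equality (inductive): $\mathsf a\approx\mathsf a$; $c\approx c$; $f(\vec t)\approx f(\vec u)$ if $t_i\approx u_i$ for all $i$; $\langle\mathsf a\rangle t\approx\langle\mathsf a\rangle u$ if $t\approx u$; $\langle\mathsf a\rangle t\approx\langle\mathsf b\rangle u$ if $\mathsf a\ne\mathsf b$, $\mathsf a\#u$ and $t\approx(\mathsf a\;\mathsf b)\cdot u$. This $\approx$ is an equivalence relation and $\approx,\#$ are preserved by swapping; $NTm=Tm/{\approx}$. An interpretation $\theta$ maps variables to elements of $NTm$ and extends to terms by $\theta(\mathsf a)=\mathsf a$, $\theta(c)=c$, $\theta(f(\vec t))=f(\theta(t_1),\dots,\theta(t_n))$, $\theta((a\;b)\cdot t)=(\theta(a)\;\theta(b))\cdot\theta(t)$, $\theta(\langle a\rangle t)=\langle\theta(a)\rangle\theta(t)$.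 $\theta\models t\approx u$ iff $\theta(t)\approx\theta(u)$; $\theta\models a\#t$ iff $\theta(a)\#\theta(t)$. $\theta:\Sigma$ means $\theta(x)$ has the type $\Sigma$ assigns to $x$ for each variable $x$ of $\Sigma$, and $\mathsf a\#\theta(x)$ for each $\mathsf a\#x\in|\Sigma|$. *)

(* Defs.v *)
From Stdlib Require Import List Bool Arith Permutation.
Import ListNotations.
Set Implicit Arguments.

Inductive ty : Type :=
| TD (d : nat)
| TN (nu : nat)
| TA (nu : nat) (t : ty).

(* Name-symbols: a name-symbol of name type nu is a pair (nu, n);
   hence each name type has a countably infinite supply of symbols,
   and the supplies of distinct name types are disjoint. *)
Definition name : Type := (nat * nat)%type.
Definition name_ty (a : name) : nat := fst a.
Definition name_eqb (a b : name) : bool :=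
  Nat.eqb (fst a) (fst b) && Nat.eqb (snd a) (snd b).

Record signature : Type := {
  con : Type;
  fsym : Type;
  rsym : Type;
  con_ty : con -> nat;
  fsym_args : fsym -> list ty;
  fsym_res : fsym -> nat;
  rsym_args : rsym -> list ty
}.
Arguments con_ty {_}. Arguments fsym_args {_}. Arguments fsym_res {_}. Arguments rsym_args {_}.

(* Terms, locally nameless: FVar = (free) variable, BVar = bound variable
   (de Bruijn index, bound by forall/exists), FNm = name-symbol,
   BNm = bound name-symbol (de Bruijn index, bound by the N-quantifier). *)
Inductive term (Sig : signature) : Type :=
| FVar (x : nat)
| BVar (i : nat)
| FNm (a : name)
| BNm (i : nat)
| TCon (c : con Sig)
| TApp (f : fsym Sig) (ts : list (term Sig))
| TSwap (a b t : term Sig)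
| TAbs (a t : term Sig).
Arguments FVar {Sig}. Arguments BVar {Sig}. Arguments FNm {Sig}. Arguments BNm {Sig}.
Arguments TCon {Sig}. Arguments TApp {Sig}. Arguments TSwap {Sig}. Arguments TAbs {Sig}.

Inductive form (Sig : signature) : Type :=
| FTop | FBot
| FEq (t u : term Sig)
| FFr (a t : term Sig)
| FRel (p : rsym Sig) (ts : list (term Sig))
| FAnd (p q : form Sig) | FOr (p q : form Sig) | FImp (p q : form Sig)
| FAll (tau : ty) (p : form Sig)
| FEx (tau : ty) (p : form Sig)
| FNew (nu : nat) (p : form Sig).
Arguments FTop {Sig}. Arguments FBot {Sig}. Arguments FEq {Sig}. Arguments FFr {Sig}.
Arguments FRel {Sig}. Arguments FAnd {Sig}. Arguments FOr {Sig}. Arguments FImp {Sig}.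
Arguments FAll {Sig}. Arguments FEx {Sig}. Arguments FNew {Sig}.

Definition is_atom (Sig : signature) (p : form Sig) : Prop :=
  match p with FEq _ _ | FFr _ _ | FRel _ _ => True | _ => False end.

Definition is_eq_or_fresh (Sig : signature) (p : form Sig) : Prop :=
  match p with FEq _ _ | FFr _ _ => True | _ => False end.

Fixpoint open_tv (Sig : signature) (k : nat) (u : term Sig) (t : term Sig) : term Sig :=
  match t with
  | BVar i => if Nat.eqb i k then u else BVar i
  | TApp f ts => TApp f (map (open_tv k u) ts)
  | TSwap a b t => TSwap (open_tv k u a) (open_tv k u b) (open_tv k u t)
  | TAbs a t => TAbs (open_tv k u a) (open_tv k u t)
  | t => t
  end.

Fixpoint open_tn (Sig : signature) (k : nat) (c : name) (t : term Sig) : term Sig :=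
  match t with
  | BNm i => if Nat.eqb i k then FNm c else BNm i
  | TApp f ts => TApp f (map (open_tn k c) ts)
  | TSwap a b t => TSwap (open_tn k c a) (open_tn k c b) (open_tn k c t)
  | TAbs a t => TAbs (open_tn k c a) (open_tn k c t)
  | t => t
  end.

Fixpoint open_fv (Sig : signature) (k : nat) (u : term Sig) (p : form Sig) : form Sig :=
  match p with
  | FTop => FTop | FBot => FBot
  | FEq t1 t2 => FEq (open_tv k u t1) (open_tv k u t2)
  | FFr a t => FFr (open_tv k u a) (open_tv k u t)
  | FRel r ts => FRel r (map (open_tv k u) ts)
  | FAnd p q => FAnd (open_fv k u p) (open_fv k u q)
  | FOr p q => FOr (open_fv k u p) (open_fv k u q)
  | FImp p q => FImp (open_fv k u p) (open_fv k u q)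
  | FAll tau p => FAll tau (open_fv (S k) u p)
  | FEx tau p => FEx tau (open_fv (S k) u p)
  | FNew nu p => FNew nu (open_fv k u p)
  end.

Fixpoint open_fn (Sig : signature) (k : nat) (c : name) (p : form Sig) : form Sig :=
  match p with
  | FTop => FTop | FBot => FBot
  | FEq t1 t2 => FEq (open_tn k c t1) (open_tn k c t2)
  | FFr a t => FFr (open_tn k c a) (open_tn k c t)
  | FRel r ts => FRel r (map (open_tn k c) ts)
  | FAnd p q => FAnd (open_fn k c p) (open_fn k c q)
  | FOr p q => FOr (open_fn k c p) (open_fn k c q)
  | FImp p q => FImp (open_fn k c p) (open_fn k c q)
  | FAll tau p => FAll tau (open_fn k c p)
  | FEx tau p => FEx tau (open_fn k c p)
  | FNew nu p => FNew nu (open_fn (S k) c p)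
  end.

(* Contexts  Sigma ::= . | Sigma, x:tau | Sigma # a:nu .
   Represented as a list whose HEAD is the most recent entry. *)
Inductive centry : Type :=
| CVar (x : nat) (tau : ty)
| CNm (a : name).
Definition ctx : Type := list centry.

Definition csym (e : centry) : nat + name :=
  match e with CVar x _ => inl x | CNm a => inr a end.

Definition ctx_ok (Sg : ctx) : Prop := NoDup (map csym Sg).

Definition var_notin (x : nat) (Sg : ctx) : Prop := forall tau, ~ In (CVar x tau) Sg.
Definition nm_notin (a : name) (Sg : ctx) : Prop := ~ In (CNm a) Sg.

(* Typing of (possibly open) terms: Bv / Bn are the types of the bound
   variables / bound name-symbols (de Bruijn). *)
Inductive typ (Sig : signature) (Sg : ctx) (Bv : list ty) (Bn : list nat)
  : term Sig -> ty -> Prop :=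
| ty_fvar x tau : In (CVar x tau) Sg -> typ Sg Bv Bn (FVar x) tau
| ty_bvar i tau : nth_error Bv i = Some tau -> typ Sg Bv Bn (BVar i) tau
| ty_fnm a : In (CNm a) Sg -> typ Sg Bv Bn (FNm a) (TN (name_ty a))
| ty_bnm i nu : nth_error Bn i = Some nu -> typ Sg Bv Bn (BNm i) (TN nu)
| ty_con c : typ Sg Bv Bn (TCon c) (TD (con_ty c))
| ty_app f ts : Forall2 (typ Sg Bv Bn) ts (fsym_args f) ->
    typ Sg Bv Bn (TApp f ts) (TD (fsym_res f))
| ty_swap nu a b t tau : typ Sg Bv Bn a (TN nu) -> typ Sg Bv Bn b (TN nu) ->
    typ Sg Bv Bn t tau -> typ Sg Bv Bn (TSwap a b t) tau
| ty_abs nu a t tau : typ Sg Bv Bn a (TN nu) -> typ Sg Bv Bn t tau ->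
    typ Sg Bv Bn (TAbs a t) (TA nu tau).

Definition wt (Sig : signature) (Sg : ctx) (t : term Sig) (tau : ty) : Prop :=
  typ Sg [] [] t tau.
Definition in_Tm (Sig : signature) (Sg : ctx) (t : term Sig) : Prop :=
  exists tau, wt Sg t tau.

Inductive wff (Sig : signature) (Sg : ctx) : list ty -> list nat -> form Sig -> Prop :=
| wf_top Bv Bn : wff Sg Bv Bn FTop
| wf_bot Bv Bn : wff Sg Bv Bn FBot
| wf_eq Bv Bn t u tau : typ Sg Bv Bn t tau -> typ Sg Bv Bn u tau -> wff Sg Bv Bn (FEq t u)
| wf_fr Bv Bn a t nu tau : typ Sg Bv Bn a (TN nu) -> typ Sg Bv Bn t tau ->
    wff Sg Bv Bn (FFr a t)
| wf_rel Bv Bn r ts : Forall2 (typ Sg Bv Bn) ts (rsym_args r) -> wff Sg Bv Bn (FRel r ts)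
| wf_and Bv Bn p q : wff Sg Bv Bn p -> wff Sg Bv Bn q -> wff Sg Bv Bn (FAnd p q)
| wf_or Bv Bn p q : wff Sg Bv Bn p -> wff Sg Bv Bn q -> wff Sg Bv Bn (FOr p q)
| wf_imp Bv Bn p q : wff Sg Bv Bn p -> wff Sg Bv Bn q -> wff Sg Bv Bn (FImp p q)
| wf_all Bv Bn tau p : wff Sg (tau :: Bv) Bn p -> wff Sg Bv Bn (FAll tau p)
| wf_ex Bv Bn tau p : wff Sg (tau :: Bv) Bn p -> wff Sg Bv Bn (FEx tau p)
| wf_new Bv Bn nu p : wff Sg Bv (nu :: Bn) p -> wff Sg Bv Bn (FNew nu p).

(* |Sigma| : the freshness formulas  a # t  with t in Tm_Sigma' where
   Sigma = Sigma' # a, ... *)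
Inductive in_bars (Sig : signature) : ctx -> term Sig -> term Sig -> Prop :=
| bars_here Sg a t : in_Tm Sg t -> in_bars (CNm a :: Sg) (FNm a) t
| bars_there e Sg a t : in_bars Sg a t -> in_bars (e :: Sg) a t.

(* Axiom instances  /\_j P_j  =>  \/_{i<=m} Q_i  (terms well-typed in Sigma). *)
Inductive ax_inst (Sig : signature) (Sg : ctx) : list (form Sig) -> list (form Sig) -> Prop :=
| ax_S1 nu a x tau : wt Sg a (TN nu) -> wt Sg x tau ->
    ax_inst Sg [] [FEq (TSwap a a x) x]
| ax_S2 nu a b x tau : wt Sg a (TN nu) -> wt Sg b (TN nu) -> wt Sg x tau ->
    ax_inst Sg [] [FEq (TSwap a b (TSwap a b x)) x]
| ax_S3 nu a b : wt Sg a (TN nu) -> wt Sg b (TN nu) ->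
    ax_inst Sg [] [FEq (TSwap a b a) b]
| ax_E1 nu a b c : wt Sg a (TN nu) -> wt Sg b (TN nu) ->
    ax_inst Sg [] [FEq (TSwap a b (TCon c)) (TCon c)]
| ax_E2_app nu a b f ts : wt Sg a (TN nu) -> wt Sg b (TN nu) ->
    in_Tm Sg (TApp f ts) ->
    ax_inst Sg [] [FEq (TSwap a b (TApp f ts)) (TApp f (map (TSwap a b) ts))]
| ax_E2_swap nu a b c d t : wt Sg a (TN nu) -> wt Sg b (TN nu) ->
    in_Tm Sg (TSwap c d t) ->
    ax_inst Sg [] [FEq (TSwap a b (TSwap c d t))
                       (TSwap (TSwap a b c) (TSwap a b d) (TSwap a b t))]
| ax_E2_abs nu a b c t : wt Sg a (TN nu) -> wt Sg b (TN nu) ->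
    in_Tm Sg (TAbs c t) ->
    ax_inst Sg [] [FEq (TSwap a b (TAbs c t)) (TAbs (TSwap a b c) (TSwap a b t))]
| ax_E3_rel nu a b r ts : wt Sg a (TN nu) -> wt Sg b (TN nu) ->
    wff Sg [] [] (FRel r ts) ->
    ax_inst Sg [FRel r ts] [FRel r (map (TSwap a b) ts)]
| ax_E3_eq nu a b t u : wt Sg a (TN nu) -> wt Sg b (TN nu) ->
    wff Sg [] [] (FEq t u) ->
    ax_inst Sg [FEq t u] [FEq (TSwap a b t) (TSwap a b u)]
| ax_E3_fr nu a b c t : wt Sg a (TN nu) -> wt Sg b (TN nu) ->
    wff Sg [] [] (FFr c t) ->
    ax_inst Sg [FFr c t] [FFr (TSwap a b c) (TSwap a b t)]
| ax_F1 nu a b x tau : wt Sg a (TN nu) -> wt Sg b (TN nu) -> wt Sg x tau ->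
    ax_inst Sg [FFr a x; FFr b x] [FEq (TSwap a b x) x]
| ax_F2 nu1 nu2 a b : nu1 <> nu2 -> wt Sg a (TN nu1) -> wt Sg b (TN nu2) ->
    ax_inst Sg [] [FFr a b]
| ax_F3 nu a : wt Sg a (TN nu) ->
    ax_inst Sg [FFr a a] []
| ax_F4 nu a b : wt Sg a (TN nu) -> wt Sg b (TN nu) ->
    ax_inst Sg [] [FFr a b; FEq a b]
| ax_A1 nu a b x y tau : wt Sg a (TN nu) -> wt Sg b (TN nu) ->
    wt Sg x tau -> wt Sg y tau ->
    ax_inst Sg [FFr a y; FEq x (TSwap a b y)] [FEq (TAbs a x) (TAbs b y)].

(* Derivability of  Sigma ; Gamma => Delta  in NL^=>.  Gamma, Delta are
   multisets, represented as lists closed under permutation. *)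
Inductive deriv (Sig : signature) : ctx -> list (form Sig) -> list (form Sig) -> Prop :=
| d_permL Sg G G' D : Permutation G G' -> deriv Sg G D -> deriv Sg G' D
| d_permR Sg G D D' : Permutation D D' -> deriv Sg G D -> deriv Sg G D'
| d_init Sg G D P : is_atom P -> deriv Sg (P :: G) (P :: D)
| d_topR Sg G D : deriv Sg G (FTop :: D)
| d_botL Sg G D : deriv Sg (FBot :: G) D
| d_andL Sg G D A B : deriv Sg (A :: B :: G) D -> deriv Sg (FAnd A B :: G) D
| d_andR Sg G D A B : deriv Sg G (A :: D) -> deriv Sg G (B :: D) ->
    deriv Sg G (FAnd A B :: D)
| d_orL Sg G D A B : deriv Sg (A :: G) D -> deriv Sg (B :: G) D ->
    deriv Sg (FOr A B :: G) D
| d_orR Sg G D A B : deriv Sg G (A :: B :: D) -> deriv Sg G (FOr A B :: D)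
| d_impL Sg G D A B : deriv Sg G (A :: D) -> deriv Sg (B :: G) D ->
    deriv Sg (FImp A B :: G) D
| d_impR Sg G D A B : deriv Sg (A :: G) (B :: D) -> deriv Sg G (FImp A B :: D)
| d_allL Sg G D tau A t : wt Sg t tau ->
    deriv Sg (open_fv 0 t A :: FAll tau A :: G) D -> deriv Sg (FAll tau A :: G) D
| d_allR Sg G D tau A x : var_notin x Sg ->
    deriv (CVar x tau :: Sg) G (open_fv 0 (FVar x) A :: D) ->
    deriv Sg G (FAll tau A :: D)
| d_exL Sg G D tau A x : var_notin x Sg ->
    deriv (CVar x tau :: Sg) (open_fv 0 (FVar x) A :: G) D ->
    deriv Sg (FEx tau A :: G) D
| d_exR Sg G D tau A t : wt Sg t tau ->
    deriv Sg G (open_fv 0 t A :: FEx tau A :: D) -> deriv Sg G (FEx tau A :: D)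
| d_newR Sg G D nu A a : nm_notin a Sg -> name_ty a = nu ->
    deriv (CNm a :: Sg) G (open_fn 0 a A :: D) -> deriv Sg G (FNew nu A :: D)
| d_newL Sg G D nu A a : nm_notin a Sg -> name_ty a = nu ->
    deriv (CNm a :: Sg) (open_fn 0 a A :: G) D -> deriv Sg (FNew nu A :: G) D
| d_eqR Sg G D t : in_Tm Sg t -> deriv Sg (FEq t t :: G) D -> deriv Sg G D
| d_eqS Sg G D t u P : is_atom P ->
    deriv Sg (open_fv 0 u P :: FEq t u :: open_fv 0 t P :: G) D ->
    deriv Sg (FEq t u :: open_fv 0 t P :: G) D
| d_ax Sg G D Ps Qs : ax_inst Sg Ps Qs ->
    (forall Q, In Q Qs -> deriv Sg (Q :: Ps ++ G) D) ->
    deriv Sg (Ps ++ G) D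
| d_A2 Sg G D a b t u :
    deriv Sg (FEq a b :: FEq t u :: FEq (TAbs a t) (TAbs b u) :: G) D ->
    deriv Sg (FFr a u :: FEq t (TSwap a b u) :: FEq (TAbs a t) (TAbs b u) :: G) D ->
    deriv Sg (FEq (TAbs a t) (TAbs b u) :: G) D
| d_A3 Sg G D t nu sigma a x : wt Sg t (TA nu sigma) ->
    var_notin a Sg -> var_notin x Sg -> a <> x ->
    deriv (CVar x sigma :: CVar a (TN nu) :: Sg)
          (FEq t (TAbs (FVar a) (FVar x)) :: G) D ->
    deriv Sg G D
| d_F Sg G D a : nm_notin a Sg -> deriv (CNm a :: Sg) G D -> deriv Sg G D
| d_SigmaFr Sg G D a t : in_bars Sg a t -> deriv Sg (FFr a t :: G) D -> deriv Sg G D.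

(* Herbrand model: ground swapping-free terms. *)
Inductive gterm (Sig : signature) : Type :=
| GNm (a : name)
| GCon (c : con Sig)
| GApp (f : fsym Sig) (ts : list (gterm Sig))
| GAbs (a : name) (t : gterm Sig).
Arguments GNm {Sig}. Arguments GCon {Sig}. Arguments GApp {Sig}. Arguments GAbs {Sig}.

Definition nswap (a b c : name) : name :=
  if name_eqb c a then b else if name_eqb c b then a else c.

Fixpoint gswap (Sig : signature) (a b : name) (t : gterm Sig) : gterm Sig :=
  match t with
  | GNm c => GNm (nswap a b c)
  | GCon c => GCon c
  | GApp f ts => GApp f (map (gswap a b) ts)
  | GAbs c t => GAbs (nswap a b c) (gswap a b t)
  end.

Inductive gfresh (Sig : signature) : name -> gterm Sig -> Prop :=
| gf_nm a b : a <> b -> gfresh a (GNm b)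
| gf_con a c : gfresh a (GCon c)
| gf_app a f ts : Forall (gfresh a) ts -> gfresh a (GApp f ts)
| gf_abs_same a t : gfresh a (GAbs a t)
| gf_abs a b t : a <> b -> gfresh a t -> gfresh a (GAbs b t).

Inductive geq (Sig : signature) : gterm Sig -> gterm Sig -> Prop :=
| ge_nm a : geq (GNm a) (GNm a)
| ge_con c : geq (GCon c) (GCon c)
| ge_app f ts us : Forall2 (@geq Sig) ts us -> geq (GApp f ts) (GApp f us)
| ge_abs_same a t u : geq t u -> geq (GAbs a t) (GAbs a u)
| ge_abs a b t u : a <> b -> gfresh a u -> geq t (gswap a b u) ->
    geq (GAbs a t) (GAbs b u).

Inductive gtyped (Sig : signature) : gterm Sig -> ty -> Prop :=
| gt_nm a : gtyped (GNm a) (TN (name_ty a))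
| gt_con c : gtyped (GCon c) (TD (con_ty c))
| gt_app f ts : Forall2 (@gtyped Sig) ts (fsym_args f) -> gtyped (GApp f ts) (TD (fsym_res f))
| gt_abs a t tau : gtyped t tau -> gtyped (GAbs a t) (TA (name_ty a) tau).

(* An interpretation maps variables to (representatives of) elements of
   NTm = Tm / ~ .  All notions below respect ~ . *)
Definition interp (Sig : signature) : Type := nat -> gterm Sig.

Fixpoint eval (Sig : signature) (th : interp Sig) (t : term Sig) : gterm Sig :=
  match t with
  | FVar x => th x
  | BVar _ => GNm (0, 0)                 (* junk: never well-typed *)
  | FNm a => GNm a
  | BNm _ => GNm (0, 0)                  (* junk: never well-typed *)
  | TCon c => GCon c
  | TApp f ts => GApp f (map (eval th) ts)
  | TSwap a b t =>
      match eval th a, eval th b with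
      | GNm a', GNm b' => gswap a' b' (eval th t)
      | _, _ => eval th t                (* junk: ill-typed *)
      end
  | TAbs a t =>
      match eval th a with
      | GNm a' => GAbs a' (eval th t)
      | _ => eval th t                   (* junk: ill-typed *)
      end
  end.

Definition sat (Sig : signature) (th : interp Sig) (A : form Sig) : Prop :=
  match A with
  | FEq t u => geq (eval th t) (eval th u)
  | FFr a t =>
      match eval th a with
      | GNm a' => gfresh a' (eval th t)
      | _ => False
      end
  | _ => False
  end.

Definition interp_of (Sig : signature) (th : interp Sig) (Sg : ctx) : Prop :=
  (forall x tau, In (CVar x tau) Sg -> gtyped (th x) tau) /\
  (forall a x, in_bars Sg (FNm a) (@FVar Sig x) -> gfresh a (th x)).

(* Main.v *)
Require Import Defs.
From Stdlib Require Import List Bool Arith Permutation Lia.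
Import ListNotations.


Fixpoint gterm_ind' {Sig : signature} (P : gterm Sig -> Prop)
  (Hn : forall a, P (GNm a)) (Hc : forall c, P (GCon c))
  (Ha : forall f ts, Forall P ts -> P (GApp f ts))
  (Hb : forall a t, P t -> P (GAbs a t)) (t : gterm Sig) {struct t} : P t :=
  match t with
  | GNm a => Hn a | GCon c => Hc c
  | GApp f ts => Ha f ts ((fix go (l : list (gterm Sig)) : Forall P l :=
        match l with nil => Forall_nil _
        | x :: l' => Forall_cons _ (gterm_ind' P Hn Hc Ha Hb x) (go l') end) ts)
  | GAbs a t => Hb a t (gterm_ind' P Hn Hc Ha Hb t)
  end.

Definition name_eq_dec : forall a b : name, {a = b} + {a <> b}.
Proof. decide equality; apply Nat.eq_dec. Defined.

Lemma name_eqb_iff a b : name_eqb a b = true <-> a = b.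
Proof.
  destruct a, b; unfold name_eqb; simpl. rewrite andb_true_iff, !Nat.eqb_eq.
  split; [intros [-> ->]; auto | intros H; inversion H; auto].
Qed.

Lemma name_eqb_dec a b : name_eqb a b = if name_eq_dec a b then true else false.
Proof.
  destruct (name_eq_dec a b) as [e|n]; [apply name_eqb_iff; auto|].
  destruct (name_eqb a b) eqn:E; auto. apply name_eqb_iff in E; congruence.
Qed.

Lemma nswap_spec a b c : nswap a b c =
  if name_eq_dec c a then b else if name_eq_dec c b then a else c.
Proof. unfold nswap. rewrite !name_eqb_dec. destruct (name_eq_dec c a), (name_eq_dec c b); auto. Qed.

Ltac nsw := repeat rewrite nswap_spec in *;
  repeat (match goal with
   | H : ?x <> ?x |- _ => exfalso; exact (H eq_refl)
   | |- context [name_eq_dec ?x ?x] => destruct (name_eq_dec x x); [|congruence]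
   | |- context [name_eq_dec ?x ?y] => is_var x; is_var y; destruct (name_eq_dec x y); [subst|]
   | H : context [name_eq_dec ?x ?x] |- _ => destruct (name_eq_dec x x); [|congruence]
   | H : context [name_eq_dec ?x ?y] |- _ => is_var x; is_var y; destruct (name_eq_dec x y); [subst|]
   end); try congruence.

Lemma nswap_comp a b c d e :
  nswap a b (nswap c d e) = nswap (nswap a b c) (nswap a b d) (nswap a b e).
Proof. nsw. Qed.
Lemma nswap_inv a b c : nswap a b (nswap a b c) = c.
Proof. nsw. Qed.
Lemma nswap_id a c : nswap a a c = c.
Proof. nsw. Qed.
Lemma nswap_sym a b c : nswap a b c = nswap b a c.
Proof. nsw. Qed.
Lemma nswap_inj a b c d : nswap a b c = nswap a b d -> c = d.
Proof. intros H. rewrite <- (nswap_inv a b c), <- (nswap_inv a b d), H; auto. Qed.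
Lemma nswap_other a b c : c <> a -> c <> b -> nswap a b c = c.
Proof. intros; nsw. Qed.
Lemma nswap_ty a b c : name_ty a = name_ty b -> name_ty (nswap a b c) = name_ty c.
Proof. intros; nsw. Qed.

Lemma gswap_comp {Sig} a b c d (t : gterm Sig) :
  gswap a b (gswap c d t) = gswap (nswap a b c) (nswap a b d) (gswap a b t).
Proof.
  induction t using gterm_ind'; simpl; try rewrite (nswap_comp a b c d); auto.
  - f_equal. rewrite !map_map. induction H; simpl; f_equal; auto.
  - f_equal; auto.
Qed.
Lemma gswap_inv {Sig} a b (t : gterm Sig) : gswap a b (gswap a b t) = t.
Proof.
  induction t using gterm_ind'; simpl; rewrite ?nswap_inv; auto.
  - f_equal. rewrite map_map. induction H; simpl; f_equal; auto.
  - f_equal; auto.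
Qed.
Lemma gswap_id {Sig} a (t : gterm Sig) : gswap a a t = t.
Proof.
  induction t using gterm_ind'; simpl; rewrite ?nswap_id; auto.
  - f_equal. induction H; simpl; f_equal; auto.
  - f_equal; auto.
Qed.
Lemma gswap_sym {Sig} a b (t : gterm Sig) : gswap a b t = gswap b a t.
Proof.
  induction t using gterm_ind'; simpl; rewrite ?(nswap_sym a b); auto.
  - f_equal. induction H; simpl; f_equal; auto.
  - f_equal; auto.
Qed.

Lemma Forall_and2 {A} (P Q R : A -> Prop) l :
  (forall x, P x -> Q x -> R x) -> Forall P l -> Forall Q l -> Forall R l.
Proof. intros H HP HQ; induction HP; inversion HQ; subst; constructor; auto. Qed.


Ltac fa2 := match goal with H : Forall2 _ _ _ |- _ => idtac end.

Lemma gfresh_swap {Sig} p q (t : gterm Sig) : forall c,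
  gfresh c t -> gfresh (nswap p q c) (gswap p q t).
Proof.
  induction t as [a|c|f ts IH|a t IH] using gterm_ind'; intros c0 Hf; inversion Hf; subst; simpl.
  - constructor. intro E; apply nswap_inj in E; auto.
  - constructor.
  - constructor. apply Forall_map. match goal with H : Forall _ ts |- _ =>
      eapply Forall_and2; [|exact IH|exact H] end. simpl; auto.
  - apply gf_abs_same.
  - constructor; auto. intro E; apply nswap_inj in E; auto.
Qed.

Lemma gfresh_swap_iff {Sig} p q c (t : gterm Sig) :
  gfresh c t <-> gfresh (nswap p q c) (gswap p q t).
Proof.
  split; [apply gfresh_swap|]. intros H. apply (gfresh_swap p q) in H.
  rewrite nswap_inv, gswap_inv in H; auto.
Qed.

Lemma geq_refl {Sig} (t : gterm Sig) : geq t t.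
Proof.
  induction t as [a|c|f ts IH|a t IH] using gterm_ind'; constructor; auto.
  induction IH; constructor; auto.
Qed.

Lemma geq_swap {Sig} p q (t : gterm Sig) : forall u,
  geq t u -> geq (gswap p q t) (gswap p q u).
Proof.
  induction t as [a|c|f ts IH|a t IH] using gterm_ind'; intros u0 He; inversion He; subst; clear He; simpl.
  - constructor.
  - constructor.
  - constructor. match goal with H : Forall2 _ _ ?us |- _ => generalize dependent us end.
    induction IH; intros us H2; inversion H2; subst; simpl; constructor; auto.
  - constructor; auto.
  - constructor.
    + intro E; apply nswap_inj in E; auto.
    + apply gfresh_swap; auto.
    + rewrite <- gswap_comp. auto.
Qed.

Lemma geq_fresh {Sig} (t : gterm Sig) : forall u c,
  geq t u -> gfresh c t -> gfresh c u.
Proof.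
  induction t as [a|c|f ts IH|a t IH] using gterm_ind'; intros u0 c0 He Hf; inversion He; subst; clear He.
  - auto.
  - auto.
  - inversion Hf; subst; clear Hf. constructor.
    match goal with H : Forall2 _ _ ?us |- _ => generalize dependent us end.
    match goal with H : Forall _ ts |- _ => revert H end.
    induction IH; intros Hfa us H2;
    inversion H2; subst; inversion Hfa; subst; constructor; eauto.
  - inversion Hf; subst; [apply gf_abs_same | constructor; eauto].
  - rename b into b0.
    inversion Hf; subst.
    + constructor; auto.
    + destruct (name_eq_dec c0 b0) as [->|Hcb]; [apply gf_abs_same|].
      constructor; auto.
      match goal with H1 : geq t _, H2 : gfresh c0 t |- _ => assert (Hx := IH _ _ H1 H2) end.
      apply (gfresh_swap a b0) in Hx.
      rewrite nswap_other in Hx by auto. rewrite gswap_inv in Hx; auto.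
Qed.

Lemma geq_sym {Sig} (t : gterm Sig) : forall u, geq t u -> geq u t.
Proof.
  induction t as [a|c|f ts IH|a t IH] using gterm_ind'; intros u0 He; inversion He; subst; clear He.
  - constructor.
  - constructor.
  - constructor. match goal with H : Forall2 _ _ ?us |- _ => generalize dependent us end.
    induction IH; intros us H2; inversion H2; subst; constructor; auto.
  - constructor; auto.
  - rename b into b0.
    match goal with H1 : geq t _, H2 : gfresh a _ |- _ => rename H1 into Ht; rename H2 into Hf end.
    constructor; auto.
    + apply IH in Ht. apply (geq_fresh _ _ _ Ht).
      apply (gfresh_swap a b0) in Hf. rewrite nswap_spec in Hf.
      destruct name_eq_dec; [|congruence]. auto.
    + apply IH in Ht. apply (geq_swap a b0) in Ht. rewrite gswap_inv in Ht.
      rewrite gswap_sym; auto.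
Qed.

Lemma swap_fresh_geq {Sig} p q (v : gterm Sig) :
  gfresh p v -> gfresh q v -> geq (gswap p q v) v.
Proof.
  induction v as [a|c|f ts IH|a t IH] using gterm_ind'; intros Ha Hb; inversion Ha; subst; inversion Hb; subst; clear Ha Hb; simpl.
  - rewrite nswap_other by auto. constructor.
  - constructor.
  - constructor. match goal with H1 : Forall (gfresh p) _, H2 : Forall (gfresh q) _ |- _ =>
      revert H1 H2 end.
    induction IH; simpl; intros H2 H3; inversion H2; inversion H3; subst; constructor; auto.
  - rewrite nswap_id, gswap_id. apply geq_refl.
  - rewrite nswap_spec. destruct name_eq_dec; [|congruence].
    apply ge_abs; auto. rewrite gswap_sym; apply geq_refl.
  - rewrite nswap_spec. destruct name_eq_dec; [congruence|].
    destruct name_eq_dec; [|congruence]. apply ge_abs; auto. apply geq_refl.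
  - rewrite nswap_other by auto. apply ge_abs_same; auto.
Qed.

Lemma Forall2_trans3 {A} (R : A -> A -> Prop) l1 :
  Forall (fun x => forall y z, R x y -> R y z -> R x z) l1 ->
  forall l2 l3, Forall2 R l1 l2 -> Forall2 R l2 l3 -> Forall2 R l1 l3.
Proof.
  induction 1; intros l2 l3 H1 H2; inversion H1; subst; inversion H2; subst; constructor; eauto.
Qed.

Lemma geq_trans {Sig} (t : gterm Sig) : forall u v, geq t u -> geq u v -> geq t v.
Proof.
  induction t as [a|c|f ts IH|a t IH] using gterm_ind'; intros u0 v0 H1 H2;
    inversion H1; subst; clear H1; inversion H2; subst; clear H2.
  - constructor.
  - constructor.
  - constructor. eapply Forall2_trans3; eauto.
  - constructor; eauto.
  - constructor; eauto.
  - match goal with H : gfresh a ?u |- geq _ (GAbs _ ?v) =>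
      assert (Hv : gfresh a v) by (eapply geq_fresh; eauto) end.
    constructor; auto.
    eapply IH; [eauto|]. apply geq_swap; auto.
  - rename b0 into c, u0 into v', u into u', b into b0.
    destruct (name_eq_dec a c) as [<-|Hac].
    + apply ge_abs_same. eapply IH; [eauto|].
      match goal with H : geq u' _ |- _ => apply (geq_swap a b0) in H end.
      rewrite (gswap_sym b0 a), gswap_inv in *. auto.
    + assert (Hav : gfresh a v').
      { assert (Hx : gfresh a (gswap b0 c v')) by (eapply geq_fresh; eauto).
        apply (gfresh_swap b0 c) in Hx.
        rewrite nswap_other, gswap_inv in Hx by auto. auto. }
      constructor; auto.
      eapply IH; [|].
      * eapply IH; [eauto|]. apply (geq_swap a b0). eauto.
      * rewrite gswap_comp. rewrite (nswap_other a b0 c) by auto.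
        rewrite nswap_spec; destruct name_eq_dec; [congruence|].
        destruct name_eq_dec; [|congruence].
        apply geq_swap. apply swap_fresh_geq; auto.
Qed.


Fixpoint term_ind' {Sig : signature} (P : term Sig -> Prop)
  (H1 : forall x, P (FVar x)) (H2 : forall i, P (BVar i))
  (H3 : forall a, P (FNm a)) (H4 : forall i, P (BNm i)) (H5 : forall c, P (TCon c))
  (H6 : forall f ts, Forall P ts -> P (TApp f ts))
  (H7 : forall a b t, P a -> P b -> P t -> P (TSwap a b t))
  (H8 : forall a t, P a -> P t -> P (TAbs a t)) (t : term Sig) {struct t} : P t :=
  match t with
  | FVar x => H1 x | BVar i => H2 i | FNm a => H3 a | BNm i => H4 i | TCon c => H5 c
  | TApp f ts => H6 f ts ((fix go (l : list (term Sig)) : Forall P l :=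
        match l with nil => Forall_nil _
        | x :: l' => Forall_cons _ (term_ind' P H1 H2 H3 H4 H5 H6 H7 H8 x) (go l') end) ts)
  | TSwap a b t => H7 a b t (term_ind' P H1 H2 H3 H4 H5 H6 H7 H8 a)
      (term_ind' P H1 H2 H3 H4 H5 H6 H7 H8 b) (term_ind' P H1 H2 H3 H4 H5 H6 H7 H8 t)
  | TAbs a t => H8 a t (term_ind' P H1 H2 H3 H4 H5 H6 H7 H8 a) (term_ind' P H1 H2 H3 H4 H5 H6 H7 H8 t)
  end.

Lemma Forall2_map_l {A B C} (f : A -> C) (R : C -> B -> Prop) l1 l2 :
  Forall2 (fun x y => R (f x) y) l1 l2 -> Forall2 R (map f l1) l2.
Proof. induction 1; simpl; constructor; auto. Qed.

Lemma Forall_Forall2 {A B} (P : A -> Prop) (R S : A -> B -> Prop) l1 l2 :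
  Forall P l1 -> Forall2 R l1 l2 -> (forall x y, P x -> R x y -> S x y) -> Forall2 S l1 l2.
Proof. intros HP HR H; revert HP; induction HR; intros HP; inversion HP; subst; constructor; auto. Qed.

Lemma gtyped_TN {Sig} (g : gterm Sig) nu : gtyped g (TN nu) -> exists c, g = GNm c /\ name_ty c = nu.
Proof. intros H; inversion H; subst; eauto. Qed.

Lemma gtyped_TA {Sig} (g : gterm Sig) nu tau : gtyped g (TA nu tau) ->
  exists c s, g = GAbs c s /\ name_ty c = nu /\ gtyped s tau.
Proof. intros H; inversion H; subst; eauto. Qed.

Lemma gtyped_swap {Sig} p q (t : gterm Sig) : name_ty p = name_ty q ->
  forall T, gtyped t T -> gtyped (gswap p q t) T.
Proof.
  intros Hpq. induction t as [a|c|f ts IH|a t IH] using gterm_ind'; intros T Ht; inversion Ht; subst; clear Ht; simpl.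
  - rewrite <- (nswap_ty p q a) by auto. constructor.
  - constructor.
  - constructor. apply Forall2_map_l. eapply Forall_Forall2; eauto.
  - rewrite <- (nswap_ty p q a) by auto. constructor; auto.
Qed.

Definition env_typed {Sig} (th : interp Sig) (Sg : ctx) :=
  forall x tau, In (CVar x tau) Sg -> gtyped (th x) tau.

Lemma eval_typed {Sig} (th : interp Sig) Sg (t : term Sig) : env_typed th Sg ->
  forall T, typ Sg [] [] t T -> gtyped (eval th t) T.
Proof.
  intros Henv. induction t as [x|i|a|i|c|f ts IH|a b t IHa IHb IHt|a t IHa IHt] using term_ind';
    intros T Ht; inversion Ht; subst; clear Ht; simpl.
  - eauto.
  - destruct i; discriminate.
  - constructor.
  - destruct i; discriminate.
  - constructor.
  - constructor. apply Forall2_map_l. eapply Forall_Forall2; eauto.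
  - match goal with Ha : typ _ _ _ a _, Hb : typ _ _ _ b _, Hs : typ _ _ _ t _ |- _ =>
      apply IHa in Ha; apply IHb in Hb; apply IHt in Hs; rename Ha into HA, Hb into HB end.
    rename HA into Ha, HB into Hb.
    apply gtyped_TN in Ha as [c1 [E1 T1]]. apply gtyped_TN in Hb as [c2 [E2 T2]].
    rewrite E1, E2. apply gtyped_swap; auto. congruence.
  - match goal with Ha : typ _ _ _ a _, Hs : typ _ _ _ t _ |- _ =>
      apply IHa in Ha; apply IHt in Hs; rename Ha into HA end. rename HA into Ha.
    apply gtyped_TN in Ha as [c1 [E1 T1]]. rewrite E1. subst. constructor; auto.
Qed.

Lemma eval_agree {Sig} (th th' : interp Sig) Sg (t : term Sig) :
  (forall x tau, In (CVar x tau) Sg -> th' x = th x) ->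
  forall Bv Bn T, typ Sg Bv Bn t T -> eval th' t = eval th t.
Proof.
  intros Hag. induction t as [x|i|a|i|c|f ts IH|a b t IHa IHb IHt|a t IHa IHt] using term_ind';
    intros Bv Bn T Ht; inversion Ht; subst; clear Ht; simpl; eauto.
  - f_equal. match goal with H : Forall2 _ ts _ |- _ => revert H end.
    generalize (fsym_args f). induction IH; intros l0 H2; inversion H2; subst; simpl; f_equal; eauto.
  - erewrite IHa, IHb, IHt; eauto.
  - erewrite IHa, IHt; eauto.
Qed.

Lemma typ_weaken {Sig} Sg Sg' (t : term Sig) : (forall e, In e Sg -> In e Sg') ->
  forall Bv Bn T, typ Sg Bv Bn t T -> typ Sg' Bv Bn t T.
Proof.
  intros Hinc. induction t as [x|i|a|i|c|f ts IH|a b t IHa IHb IHt|a t IHa IHt] using term_ind';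
    intros Bv Bn T Ht; inversion Ht; subst; clear Ht; econstructor; eauto.
  eapply Forall_Forall2; eauto.
Qed.

Lemma NoDup_map_inj {A B} (f : A -> B) l a b :
  NoDup (map f l) -> In a l -> In b l -> f a = f b -> a = b.
Proof.
  induction l; simpl; intros Hn Ha Hb E; [contradiction|]. inversion Hn; subst.
  destruct Ha as [<-|Ha], Hb as [<-|Hb]; auto.
  - exfalso. apply H1. rewrite E. apply in_map; auto.
  - exfalso. apply H1. rewrite <- E. apply in_map; auto.
Qed.

Lemma typ_unique {Sig} Sg (t : term Sig) : ctx_ok Sg ->
  forall Bv Bn T1 T2, typ Sg Bv Bn t T1 -> typ Sg Bv Bn t T2 -> T1 = T2.
Proof.
  intros Hok. induction t as [x|i|a|i|c|f ts IH|a b t IHa IHb IHt|a t IHa IHt] using term_ind';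
    intros Bv Bn T1 T2 H1 H2; inversion H1; subst; clear H1; inversion H2; subst; clear H2; auto.
  - match goal with H1 : In (CVar x ?t1) Sg, H2 : In (CVar x ?t2) Sg |- _ =>
      assert (E := NoDup_map_inj csym Sg _ _ Hok H1 H2 eq_refl) end. congruence.
  - congruence.
  - congruence.
  - eauto.
  - f_equal; [|eauto]. match goal with H1 : typ _ _ _ a (TN ?n1), H2 : typ _ _ _ a (TN ?n2) |- _ =>
      assert (E := IHa _ _ _ _ H1 H2) end. congruence.
Qed.

Lemma open_typ {Sig} Sg (t u : term Sig) tau : ctx_ok Sg ->
  typ Sg [] [] t tau -> typ Sg [] [] u tau ->
  forall s T, typ Sg [] [] (open_tv 0 t s) T -> typ Sg [] [] (open_tv 0 u s) T.
Proof.
  intros Hok Ht Hu s. induction s as [x|i|a|i|c|f ts IH|a b s IHa IHb IHs|a s IHa IHs] using term_ind';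
    intros T Hs; simpl in *.
  - auto.
  - destruct (Nat.eqb i 0); auto. rewrite (typ_unique Sg t Hok _ _ _ _ Hs Ht). auto.
  - auto.
  - auto.
  - auto.
  - inversion Hs; subst; clear Hs. constructor.
    match goal with H : Forall2 _ _ _ |- _ => revert H end. generalize (fsym_args f).
    induction IH; simpl; intros l0 H2; inversion H2; subst; constructor; auto.
  - inversion Hs; subst; clear Hs. econstructor; eauto.
  - inversion Hs; subst; clear Hs. econstructor; eauto.
Qed.

Lemma geq_nm_l {Sig} c (g : gterm Sig) : geq (GNm c) g -> g = GNm c.
Proof. intros H; inversion H; auto. Qed.
Lemma geq_nm_r {Sig} c (g : gterm Sig) : geq g (GNm c) -> g = GNm c.
Proof. intros H; inversion H; auto. Qed.

Lemma eval_open_geq {Sig} (th : interp Sig) (t u : term Sig) :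
  geq (eval th t) (eval th u) ->
  forall s k, geq (eval th (open_tv k t s)) (eval th (open_tv k u s)).
Proof.
  intros Htu s. induction s as [x|i|a|i|c|f ts IH|a b s IHa IHb IHs|a s IHa IHs] using term_ind';
    intros k; simpl; try apply geq_refl.
  - destruct (Nat.eqb i k); auto. apply geq_refl.
  - constructor. induction IH; simpl; constructor; auto.
  - specialize (IHa k); specialize (IHb k); specialize (IHs k).
    destruct (eval th (open_tv k t a)) eqn:Ea;
      try (destruct (eval th (open_tv k u a)) eqn:Ea'; try (apply geq_nm_r in IHa; discriminate); auto; fail).
    apply geq_nm_l in IHa. rewrite IHa.
    destruct (eval th (open_tv k t b)) eqn:Eb;
      try (destruct (eval th (open_tv k u b)) eqn:Eb'; try (apply geq_nm_r in IHb; discriminate); auto; fail).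
    apply geq_nm_l in IHb. rewrite IHb. apply geq_swap; auto.
  - specialize (IHa k); specialize (IHs k).
    destruct (eval th (open_tv k t a)) eqn:Ea;
      try (destruct (eval th (open_tv k u a)) eqn:Ea'; try (apply geq_nm_r in IHa; discriminate); auto; fail).
    apply geq_nm_l in IHa. rewrite IHa. apply ge_abs_same; auto.
Qed.

Lemma eval_swap_env {Sig} (th : interp Sig) Sg p q (t : term Sig) :
  (forall c, In (CNm c) Sg -> c <> p /\ c <> q) ->
  forall T, typ Sg [] [] t T ->
  eval (fun y => gswap p q (th y)) t = gswap p q (eval th t).
Proof.
  intros Hn. induction t as [x|i|a|i|c|f ts IH|a b t IHa IHb IHt|a t IHa IHt] using term_ind';
    intros T Ht; inversion Ht; subst; clear Ht; simpl.
  - auto.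
  - destruct i; discriminate.
  - match goal with H : In (CNm a) Sg |- _ => destruct (Hn _ H) end.
    rewrite nswap_other; auto.
  - destruct i; discriminate.
  - auto.
  - f_equal. rewrite map_map. match goal with H : Forall2 _ ts _ |- _ => revert H end.
    generalize (fsym_args f). induction IH; intros l0 H2; inversion H2; subst; simpl; f_equal; eauto.
  - erewrite IHa, IHb, IHt by eauto.
    destruct (eval th a) eqn:Ea; simpl; auto.
    destruct (eval th b) eqn:Eb; simpl; auto.
    symmetry; apply gswap_comp.
  - erewrite IHa, IHt by eauto.
    destruct (eval th a) eqn:Ea; simpl; auto.
Qed.

Lemma eval_nm {Sig} (th : interp Sig) Sg (a : term Sig) nu :
  env_typed th Sg -> typ Sg [] [] a (TN nu) -> exists c, eval th a = GNm c.
Proof.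
  intros He Ha. apply (eval_typed th) in Ha; auto. apply gtyped_TN in Ha as [c [E _]]; eauto.
Qed.

Lemma fresh_eval {Sig} (th : interp Sig) Sg p (t : term Sig) :
  (forall x tau, In (CVar x tau) Sg -> gtyped (th x) tau /\ gfresh p (th x)) ->
  (forall c, In (CNm c) Sg -> c <> p) ->
  forall T, typ Sg [] [] t T -> gfresh p (eval th t).
Proof.
  intros Hv Hn.
  assert (Henv : env_typed th Sg) by (intros x tau H; apply (Hv _ _ H)).
  induction t as [x|i|a|i|c|f ts IH|a b t IHa IHb IHt|a t IHa IHt] using term_ind';
    intros T Ht; inversion Ht; subst; clear Ht; simpl.
  - eapply Hv; eauto.
  - destruct i; discriminate.
  - constructor. intros ->. eapply Hn; eauto.
  - destruct i; discriminate.
  - constructor.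
  - constructor. apply Forall_map. match goal with H : Forall2 _ ts _ |- _ => revert H end.
    generalize (fsym_args f). induction IH; intros l0 H2; inversion H2; subst; simpl; constructor; eauto.
  - match goal with Ha : typ _ _ _ a _, Hb : typ _ _ _ b _, Hs : typ _ _ _ t _ |- _ =>
      pose proof (IHa _ Ha) as Fa; pose proof (IHb _ Hb) as Fb; pose proof (IHt _ Hs) as Ft;
      destruct (eval_nm th Sg a _ Henv Ha) as [c1 E1];
      destruct (eval_nm th Sg b _ Henv Hb) as [c2 E2] end.
    rewrite E1, E2 in *. inversion Fa; inversion Fb; subst.
    rewrite <- (nswap_other c1 c2 p) by auto. apply gfresh_swap; auto.
  - match goal with Ha : typ _ _ _ a _, Hs : typ _ _ _ t _ |- _ =>
      pose proof (IHa _ Ha) as Fa; pose proof (IHt _ Hs) as Ft;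
      destruct (eval_nm th Sg a _ Henv Ha) as [c1 E1] end.
    rewrite E1 in *. inversion Fa; subst. constructor; auto.
Qed.


Definition good {Sig} Sg (A : form Sig) := is_eq_or_fresh A /\ wff Sg [] [] A.

Lemma wff_eq_inv {Sig} Sg (t u : term Sig) : wff Sg [] [] (FEq t u) ->
  exists tau, typ Sg [] [] t tau /\ typ Sg [] [] u tau.
Proof. intros H; inversion H; subst; eauto. Qed.
Lemma wff_fr_inv {Sig} Sg (a t : term Sig) : wff Sg [] [] (FFr a t) ->
  exists nu tau, typ Sg [] [] a (TN nu) /\ typ Sg [] [] t tau.
Proof. intros H; inversion H; subst; eauto. Qed.

Lemma env_of {Sig} (th : interp Sig) Sg : interp_of th Sg -> env_typed th Sg.
Proof. intros [H _]; exact H. Qed.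

Lemma good_eq {Sig} Sg (t u : term Sig) tau :
  typ Sg [] [] t tau -> typ Sg [] [] u tau -> good Sg (FEq t u).
Proof. intros; split; [exact I| econstructor; eauto]. Qed.
Lemma good_fr {Sig} Sg (a t : term Sig) nu tau :
  typ Sg [] [] a (TN nu) -> typ Sg [] [] t tau -> good Sg (FFr a t).
Proof. intros; split; [exact I| econstructor; eauto]. Qed.

Ltac getnm th Sg a c E :=
  match goal with
  | H : typ Sg [] [] a (TN _) , Hi : interp_of th Sg |- _ =>
      destruct (eval_nm th Sg a _ (env_of th Sg Hi) H) as [c E]
  | H : wt Sg a (TN _) , Hi : interp_of th Sg |- _ =>
      destruct (eval_nm th Sg a _ (env_of th Sg Hi) H) as [c E]
  end.

Lemma ax_sound {Sig} Sg (Ps Qs : list (form Sig)) th :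
  ax_inst Sg Ps Qs -> ctx_ok Sg -> interp_of th Sg ->
  Forall (good Sg) Ps -> Forall (sat th) Ps ->
  exists Q, In Q Qs /\ good Sg Q /\ sat th Q.
Proof.
  intros Hax Hok Hth HG HS. unfold wt in *.
  destruct Hax.
  - exists (FEq (TSwap a a x) x); split; [left; auto|]. split.
    + eapply good_eq; [econstructor; eauto|eauto].
    + getnm th Sg a c Ea. simpl. rewrite Ea, gswap_id. apply geq_refl.
  - eexists; split; [left; reflexivity|]. split.
    + eapply good_eq; [econstructor; eauto; econstructor; eauto|eauto].
    + getnm th Sg a c Ea. getnm th Sg b d Eb. simpl. rewrite Ea, Eb, gswap_inv. apply geq_refl.
  - eexists; split; [left; reflexivity|]. split.
    + eapply good_eq; [econstructor; eauto|eauto].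
    + getnm th Sg a c Ea. getnm th Sg b d Eb. simpl. rewrite Ea, Eb. simpl.
      rewrite nswap_spec. destruct name_eq_dec; [|congruence]. constructor.
  - eexists; split; [left; reflexivity|]. split.
    + eapply good_eq; [econstructor; eauto; constructor|constructor].
    + getnm th Sg a c0 Ea. getnm th Sg b d Eb. simpl. rewrite Ea, Eb. simpl. constructor.
  - eexists; split; [left; reflexivity|]. destruct H1 as [T HT]. split.
    + inversion HT; subst. eapply good_eq; [econstructor; eauto|].
      constructor. apply Forall2_map_l. eapply Forall2_impl; [|eauto].
      intros; econstructor; eauto.
    + getnm th Sg a c Ea. getnm th Sg b d Eb. simpl. rewrite Ea, Eb. simpl.
      rewrite !map_map. simpl. rewrite Ea, Eb. apply geq_refl.
  - eexists; split; [left; reflexivity|]. destruct H1 as [T HT]. split.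
    + inversion HT; subst. eapply good_eq; [econstructor; eauto|].
      econstructor; econstructor; eauto.
    + inversion HT; subst.
      getnm th Sg a a' Ea. getnm th Sg b b' Eb. getnm th Sg c c' Ec. getnm th Sg d d' Ed.
      simpl. rewrite Ea, Eb, Ec, Ed. simpl. rewrite gswap_comp. apply geq_refl.
  - eexists; split; [left; reflexivity|]. destruct H1 as [T HT]. split.
    + inversion HT; subst. eapply good_eq; [econstructor; eauto|].
      econstructor; econstructor; eauto.
    + inversion HT; subst.
      getnm th Sg a a' Ea. getnm th Sg b b' Eb. getnm th Sg c c' Ec.
      simpl. rewrite Ea, Eb, Ec. simpl. apply geq_refl.
  - inversion HG; subst. destruct H4 as [[] _].
  - eexists; split; [left; reflexivity|]. apply wff_eq_inv in H1 as [T [Ht Hu]]. split.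
    + eapply good_eq; econstructor; eauto.
    + inversion HS; subst. simpl in *. getnm th Sg a a' Ea. getnm th Sg b b' Eb.
      rewrite Ea, Eb. apply geq_swap; auto.
  - eexists; split; [left; reflexivity|]. apply wff_fr_inv in H1 as [nu' [T [Hc Ht]]]. split.
    + eapply good_fr; econstructor; eauto.
    + inversion HS; subst. simpl in *. getnm th Sg a a' Ea. getnm th Sg b b' Eb.
      getnm th Sg c c' Ec. rewrite Ec in *. simpl. rewrite Ea, Eb. simpl.
      apply gfresh_swap; auto.
  - eexists; split; [left; reflexivity|]. split.
    + eapply good_eq; [econstructor; eauto|eauto].
    + inversion HS; subst. inversion H5; subst. simpl in *. getnm th Sg a a' Ea. getnm th Sg b b' Eb.
      rewrite Ea, Eb in *. apply swap_fresh_geq; auto.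
  - eexists; split; [left; reflexivity|]. split.
    + eapply good_fr; eauto.
    + simpl. pose proof (eval_typed th Sg a (env_of _ _ Hth) _ H0) as T1.
      pose proof (eval_typed th Sg b (env_of _ _ Hth) _ H1) as T2.
      apply gtyped_TN in T1 as [a' [Ea Ta]]. apply gtyped_TN in T2 as [b' [Eb Tb]].
      rewrite Ea, Eb. constructor. intros ->. congruence.
  - inversion HS; subst. simpl in *. getnm th Sg a a' Ea. rewrite Ea in *.
    inversion H2; congruence.
  - getnm th Sg a a' Ea. getnm th Sg b b' Eb.
    destruct (name_eq_dec a' b') as [<-|Hne].
    + exists (FEq a b); split; [right; left; reflexivity|]. split.
      * eapply good_eq; eauto.
      * simpl. rewrite Ea, Eb. constructor.
    + exists (FFr a b); split; [left; reflexivity|]. split.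
      * eapply good_fr; eauto.
      * simpl. rewrite Ea, Eb. constructor; auto.
  - eexists; split; [left; reflexivity|]. split.
    + eapply good_eq; econstructor; eauto.
    + inversion HS; subst. inversion H6; subst. simpl in *. getnm th Sg a a' Ea. getnm th Sg b b' Eb.
      rewrite Ea, Eb in *.
      destruct (name_eq_dec a' b') as [<-|Hne].
      * rewrite gswap_id in *. apply ge_abs_same; auto.
      * apply ge_abs; auto.
Qed.


Lemma Forall_perm {A} (P : A -> Prop) l l' : Permutation l l' -> Forall P l -> Forall P l'.
Proof. intros Hp H. rewrite Forall_forall in *. intros x Hx. apply H. eapply Permutation_in; [apply Permutation_sym; exact Hp|exact Hx]. Qed.

Lemma good_weaken {Sig} Sg Sg' (A : form Sig) : (forall e, In e Sg -> In e Sg') -> good Sg A -> good Sg' A.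
Proof.
  intros Hi [Ha Hw]. destruct A; try contradiction.
  - apply wff_eq_inv in Hw as [tau [H1 H2]]. eapply good_eq; eapply typ_weaken; eauto.
  - apply wff_fr_inv in Hw as [nu [tau [H1 H2]]]. eapply good_fr; eapply typ_weaken; eauto.
Qed.

Lemma sat_agree {Sig} Sg (A : form Sig) th th' : good Sg A ->
  (forall x tau, In (CVar x tau) Sg -> th' x = th x) -> sat th A -> sat th' A.
Proof.
  intros [Ha Hw] Hag. destruct A; try contradiction; simpl.
  - apply wff_eq_inv in Hw as [tau [H1 H2]].
    rewrite (eval_agree th th' Sg t Hag _ _ _ H1), (eval_agree th th' Sg u Hag _ _ _ H2). auto.
  - apply wff_fr_inv in Hw as [nu [tau [H1 H2]]].
    rewrite (eval_agree th th' Sg a Hag _ _ _ H1), (eval_agree th th' Sg t Hag _ _ _ H2). auto.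
Qed.

Lemma sat_swap {Sig} Sg (A : form Sig) th p q : good Sg A ->
  (forall c, In (CNm c) Sg -> c <> p /\ c <> q) -> sat th A -> sat (fun y => gswap p q (th y)) A.
Proof.
  intros [Ha Hw] Hn. destruct A; try contradiction; simpl.
  - apply wff_eq_inv in Hw as [tau [H1 H2]].
    rewrite (eval_swap_env th Sg p q t Hn _ H1), (eval_swap_env th Sg p q u Hn _ H2).
    apply geq_swap.
  - apply wff_fr_inv in Hw as [nu [tau [H1 H2]]].
    rewrite (eval_swap_env th Sg p q a Hn _ H1), (eval_swap_env th Sg p q t Hn _ H2).
    destruct (eval th a); simpl; try contradiction. apply gfresh_swap.
Qed.

Lemma interp_of_tail {Sig} (th : interp Sig) e Sg : interp_of th (e :: Sg) -> interp_of th Sg.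
Proof.
  intros [H1 H2]. split.
  - intros x tau H. apply H1. right; auto.
  - intros a x H. apply H2. apply bars_there; auto.
Qed.

Lemma ctx_ok_tail e Sg : ctx_ok (e :: Sg) -> ctx_ok Sg.
Proof. intros H. inversion H; auto. Qed.

Lemma ctx_ok_nm a Sg : ctx_ok (CNm a :: Sg) -> ~ In (CNm a) Sg.
Proof. intros H Hin. inversion H; subst. apply H2. change (inr a) with (csym (CNm a)). apply in_map; auto. Qed.

Lemma bars_sound {Sig} Sg (a t : term Sig) th : in_bars Sg a t -> ctx_ok Sg -> interp_of th Sg ->
  good Sg (FFr a t) /\ sat th (FFr a t).
Proof.
  induction 1 as [Sg b t Ht|e Sg b t Hb IH]; intros Hok Hth.
  - destruct Ht as [T Ht]. split.
    + eapply good_fr; [constructor; left; reflexivity|].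
      eapply typ_weaken; [|exact Ht]. intros; right; auto.
    + simpl. eapply fresh_eval; [| |exact Ht].
      * intros x tau Hx. split.
        -- apply (proj1 Hth). right; auto.
        -- apply (proj2 Hth). constructor. exists tau. constructor; auto.
      * intros c Hc ->. eapply ctx_ok_nm; eauto.
  - destruct (IH (ctx_ok_tail _ _ Hok) (interp_of_tail _ _ _ Hth)) as [G S].
    split; auto. eapply good_weaken; [|exact G]. intros; right; auto.
Qed.

Lemma bars_nm {Sig} Sg (a t : term Sig) : in_bars Sg a t -> exists b, a = FNm b /\ In (CNm b) Sg.
Proof. induction 1; [eexists; split; [reflexivity|left; auto]|]. destruct IHin_bars as [b [-> Hb]]; eexists; split; eauto; right; auto. Qed.

Lemma bars_var {Sig} Sg (a : term Sig) y : in_bars Sg a (FVar y) -> exists tau, In (CVar y tau) Sg.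
Proof.
  remember (@FVar Sig y) as t eqn:Et. induction 1; subst.
  - destruct H as [T HT]. inversion HT; subst. eexists; right; eauto.
  - destruct IHin_bars as [tau Hin]; auto. eexists; right; eauto.
Qed.

Fixpoint gnames {Sig} (t : gterm Sig) : list name :=
  match t with GNm a => [a] | GCon _ => [] | GApp _ ts => flat_map gnames ts
  | GAbs a t => a :: gnames t end.

Lemma notin_gnames_fresh {Sig} p (t : gterm Sig) : ~ In p (gnames t) -> gfresh p t.
Proof.
  induction t as [a|c|f ts IH|a t IH] using gterm_ind'; simpl; intros H.
  - constructor. intros ->; auto.
  - constructor.
  - constructor. induction IH; constructor; simpl in H; rewrite in_app_iff in H; auto.
  - constructor; auto.
Qed.

Definition ctx_vars (Sg : ctx) : list nat :=
  flat_map (fun e => match e with CVar x _ => [x] | _ => [] end) Sg.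
Definition ctx_names (Sg : ctx) : list name :=
  flat_map (fun e => match e with CNm a => [a] | _ => [] end) Sg.

Lemma in_ctx_vars x tau Sg : In (CVar x tau) Sg -> In x (ctx_vars Sg).
Proof. intros H. unfold ctx_vars. apply in_flat_map. exists (CVar x tau); simpl; auto. Qed.
Lemma in_ctx_names a Sg : In (CNm a) Sg -> In a (ctx_names Sg).
Proof. intros H. unfold ctx_names. apply in_flat_map. exists (CNm a); simpl; auto. Qed.

Lemma exists_fresh_name (l : list name) (k : nat) : exists a : name, fst a = k /\ ~ In a l.
Proof.
  exists (k, S (list_max (map snd l))). split; auto. intros H.
  assert (Hle : snd (k, S (list_max (map snd l))) <= list_max (map snd l)).
  { pose proof (proj1 (list_max_le (map snd l) (list_max (map snd l))) (le_n _)) as HF.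
    rewrite Forall_forall in HF. apply HF. apply in_map; auto. }
  simpl in Hle. lia.
Qed.


Lemma eqS_good {Sig} Sg (t u : term Sig) P : ctx_ok Sg -> is_atom P ->
  good Sg (FEq t u) -> good Sg (open_fv 0 t P) -> good Sg (open_fv 0 u P).
Proof.
  intros Hok HP [_ Hw1] [Ha Hw2]. apply wff_eq_inv in Hw1 as [tau [Ht Hu]].
  destruct P; try contradiction; simpl in *.
  - apply wff_eq_inv in Hw2 as [T [H1 H2]].
    eapply good_eq; [apply (open_typ Sg t u tau Hok Ht Hu _ _ H1)|apply (open_typ Sg t u tau Hok Ht Hu _ _ H2)].
  - apply wff_fr_inv in Hw2 as [nu [T [H1 H2]]].
    eapply good_fr; [apply (open_typ Sg t u tau Hok Ht Hu _ _ H1)|apply (open_typ Sg t u tau Hok Ht Hu _ _ H2)].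
Qed.

Lemma eqS_sat {Sig} th (t u : term Sig) P : is_atom P ->
  sat th (FEq t u) -> sat th (open_fv 0 t P) -> sat th (open_fv 0 u P).
Proof.
  intros HP H1 H2. simpl in H1. destruct P; try contradiction; simpl in *.
  - pose proof (eval_open_geq th t u H1 t0 0) as E1.
    pose proof (eval_open_geq th t u H1 u0 0) as E2.
    eapply geq_trans; [apply geq_sym; exact E1|]. eapply geq_trans; [exact H2|exact E2].
  - pose proof (eval_open_geq th t u H1 a 0) as E1.
    pose proof (eval_open_geq th t u H1 t0 0) as E2.
    destruct (eval th (open_tv 0 t a)) eqn:Ea; try contradiction.
    apply geq_nm_l in E1. rewrite E1. eapply geq_fresh; eauto.
Qed.

Lemma bars_cons_inv {Sig} e Sg (t1 t2 : term Sig) : in_bars (e :: Sg) t1 t2 ->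
  (exists a, e = CNm a /\ t1 = FNm a /\ in_Tm Sg t2) \/ in_bars Sg t1 t2.
Proof. intros H; inversion H; subst; eauto. Qed.

Lemma sound {Sig} Sg (G D : list (form Sig)) : deriv Sg G D -> D = [FBot] -> ctx_ok Sg ->
  Forall (good Sg) G -> forall th, interp_of th Sg -> Forall (sat th) G -> False.
Proof.
  induction 1; intros HD Hok HG th Hth HS; try discriminate;
    try (inversion HD; subst; contradiction);
    try (inversion HG as [|? ? [Hb _] _]; subst; contradiction).
  - apply (IHderiv HD Hok) with th; auto; apply (Forall_perm _ G' G); auto; apply Permutation_sym; auto.
  - subst. apply (IHderiv) with th; auto. apply Permutation_sym in H. apply Permutation_length_1_inv in H. auto.
  - apply (IHderiv HD Hok) with th; auto.
    + constructor; auto. destruct H as [T HT]. eapply good_eq; eauto.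
    + constructor; auto. simpl. apply geq_refl.
  - apply (IHderiv HD Hok) with th; auto.
    + inversion HG; subst. inversion H4; subst. constructor; auto. eapply eqS_good; eauto.
    + inversion HS; subst. inversion H4; subst. constructor; auto. eapply eqS_sat; eauto.
  - apply Forall_app in HG as [HGP HGG]. apply Forall_app in HS as [HSP HSG].
    destruct (ax_sound Sg Ps Qs th H Hok Hth HGP HSP) as [Q [HQ [GQ SQ]]].
    refine (H1 Q HQ HD Hok _ th Hth _); constructor; auto; apply Forall_app; auto.
  - inversion HG as [|? ? GE HG']; subst. inversion HS as [|? ? SE HS']; subst.
    pose proof GE as GE'. destruct GE' as [_ WE]. apply wff_eq_inv in WE as [T [Ht Hu]].
    inversion Ht; subst; clear Ht. inversion Hu; subst; clear Hu.
    getnm th Sg a a' Ea. getnm th Sg b b' Eb.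
    simpl in SE. rewrite Ea, Eb in SE. inversion SE; subst.
    + apply (IHderiv1 eq_refl Hok) with th; [|exact Hth|].
      * constructor; [eapply good_eq; eauto|]. constructor; [eapply good_eq; eauto|]. constructor; auto.
      * apply Forall_cons; [simpl; rewrite Ea, Eb; constructor|apply Forall_cons; [assumption|exact HS]].
    + apply (IHderiv2 eq_refl Hok) with th; [|exact Hth|].
      * constructor; [eapply good_fr; eauto|]. constructor; [eapply good_eq; [eauto|econstructor; eauto]|].
        constructor; auto.
      * apply Forall_cons; [simpl; rewrite Ea; assumption|].
        apply Forall_cons; [simpl; rewrite Ea, Eb; assumption|exact HS].
  -
    rename a into va, x into vx.
    pose proof (eval_typed th Sg t (env_of _ _ Hth) _ H) as Tt.
    apply gtyped_TA in Tt as [c [s [Et [Tc Ts]]]].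
    pose (th' := fun y => if Nat.eqb y vx then s else if Nat.eqb y va then GNm c else th y).
    assert (Hag : forall y tau, In (CVar y tau) Sg -> th' y = th y).
    { intros y tau Hy. unfold th'. destruct (Nat.eqb_spec y vx); [subst; exfalso; eapply H1; eauto|].
      destruct (Nat.eqb_spec y va); [subst; exfalso; eapply H0; eauto|]. auto. }
    assert (Hinc : forall e, In e Sg -> In e (CVar vx sigma :: CVar va (TN nu) :: Sg))
      by (intros; right; right; auto).
    assert (Hva : th' va = GNm c).
    { unfold th'. destruct (Nat.eqb_spec va vx); [congruence|]. rewrite Nat.eqb_refl; auto. }
    assert (Hvx : th' vx = s) by (unfold th'; rewrite Nat.eqb_refl; auto).
    clearbody th'.
    apply (IHderiv HD) with th'.
    + unfold ctx_ok; simpl. constructor.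
      * intro Hin. destruct Hin as [E|Hin]; [inversion E; congruence|].
        apply in_map_iff in Hin as [e [Ee Hin]]. destruct e; simpl in Ee; inversion Ee; subst.
        eapply H1; eauto.
      * constructor; [|exact Hok]. intro Hin.
        apply in_map_iff in Hin as [e [Ee Hin]]. destruct e; simpl in Ee; inversion Ee; subst.
        eapply H0; eauto.
    + constructor.
      * eapply good_eq; [eapply typ_weaken; [exact Hinc|exact H]|].
        econstructor; constructor; [right; left|left]; reflexivity.
      * eapply Forall_impl; [|exact HG]. intros; eapply good_weaken; eauto.
    + split.
      * intros y tau Hy. destruct Hy as [E|[E|Hy]].
        -- inversion E; subst; auto.
        -- inversion E; subst. rewrite Hva. constructor.
        -- rewrite (Hag _ _ Hy). apply (proj1 Hth); auto.
      * intros b y Hb. inversion Hb; subst. match goal with H : in_bars _ _ _ |- _ => inversion H; subst end.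
        match goal with H : in_bars Sg _ _ |- _ => rename H into Hb2 end.
        destruct (bars_var _ _ _ Hb2) as [tau Hy]. rewrite (Hag _ _ Hy). apply (proj2 Hth); auto.
    + constructor.
      * simpl. rewrite (eval_agree th th' Sg t Hag _ _ _ H), Et, Hva, Hvx. apply geq_refl.
      * eapply Forall_and2; [|exact HG|exact HS]. intros A GA SA. eapply sat_agree; eauto.
  -
    destruct (exists_fresh_name (a :: ctx_names Sg ++ flat_map (fun y => gnames (th y)) (ctx_vars Sg)) (fst a)) as [a' [Fa' Na']].
    assert (Hne : forall c, In (CNm c) Sg -> c <> a /\ c <> a').
    { intros c Hc; split; intros ->; [apply H; auto|].
      apply Na'; right; apply in_or_app; left; apply in_ctx_names; auto. }
    apply (IHderiv HD) with (fun y => gswap a a' (th y)).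
    + constructor; [|exact Hok]. intro Hin.
      apply in_map_iff in Hin as [e [Ee Hin]]. destruct e; simpl in Ee; inversion Ee; subst. apply H; auto.
    + eapply Forall_impl; [|exact HG]. intros; eapply good_weaken; [|eauto]. intros; right; auto.
    + split.
      * intros y tau Hy. destruct Hy as [E|Hy]; [discriminate|].
        apply gtyped_swap; [unfold name_ty; congruence|]. apply (proj1 Hth); auto.
      * intros b y Hb. apply bars_cons_inv in Hb as [[a0 [Ee [Eb [T HT]]]]|Hb2].
        -- injection Ee as <-. injection Eb as ->. inversion HT; subst.
           assert (Fy : gfresh a' (th y)).
           { apply notin_gnames_fresh. intro Hin. apply Na'. right. apply in_or_app; right.
             apply in_flat_map. exists y; split; auto. eapply in_ctx_vars; eauto. }
           apply (gfresh_swap a a') in Fy.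
           replace (nswap a a' a') with a in Fy; auto.
           rewrite nswap_spec. destruct name_eq_dec; auto. destruct name_eq_dec; congruence.
        -- destruct (bars_nm _ _ _ Hb2) as [b0 [Eb Hb0]]. inversion Eb; subst.
           destruct (Hne _ Hb0) as [N1 N2].
           rewrite <- (nswap_other a a' b0) by auto. apply gfresh_swap. apply (proj2 Hth); auto.
    + eapply Forall_and2; [|exact HG|exact HS]. intros A GA SA. eapply sat_swap; eauto.
  - destruct (bars_sound Sg a t th H Hok Hth) as [G1 S1].
    apply (IHderiv HD Hok) with th; [constructor; auto|exact Hth|constructor; auto].
Qed.


Theorem mainTheorem8 (Sig : signature) (Sg : ctx) (G : list (form Sig)) :
  ctx_ok Sg ->
  Forall (fun A => is_eq_or_fresh A /\ wff Sg [] [] A) G ->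
  deriv Sg G [FBot] ->
  ~ (exists th : interp Sig, interp_of th Sg /\ Forall (sat th) G).
Proof.
  intros Hok HG Hd [th [Hth HS]].
  exact (sound Sg G [FBot] Hd eq_refl Hok HG th Hth HS).
Qed.
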